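(* Let $n\ge4$, $r_1,r_2\in\mathbb{Z}_+$ with $r_1+r_2=n-1$, and let $-1<\alpha_1<1$, $0\le\alpha_2,\alpha_3<1$ with $\alpha_1+\alpha_2+\alpha_3=1$ and $r_1+\alpha_1\ge r_2+\alpha_2$. Then $$\mathfrak{L}_n(r_1,r_2,0,\alpha_1,\alpha_2,\alpha_3)\le \mathfrak{L}_n(r_1+r_2,0,0,\alpha_1,\alpha_2,\alpha_3)+2^{r_2+2}+1-r_2+2^{r_2+1}\ln n.$$
   Context: Points of a triangle are identified with barycentric coordinates $\lambda=(\lambda_1,\lambda_2,\lambda_3)$, $\lambda_r\ge0$, $\sum\lambda_r=1$. For an integer $n\ge1$ let $I=\{i=(i_1,i_2,i_3)\in\mathbb{Z}_+^3: i_1+i_2+i_3=n\}$, and let $l_i(\lambda)=\prod_{s=1}^{3}\frac{1}{i_s!}\prod_{t=0}^{i_s-1}(n\lambda_s-t)$ (the Lagrange fundamental polynomials for the equally spaced nodes $i/n$, $i\in I$). The Lebesgue function is $\mathcal{L}_n(\lambda)=\sum_{i\in I}|l_i(\lambda)|$. For $r_s\in\mathbb{Z}_+$ with $r_1+r_2+r_3=n-1$ and reals $\alpha_s$ with $\alpha_1+\alpha_2+\alpha_3=1$, write $\mathfrak{L}_n(r_1,r_2,r_3,\alpha_1,\alpha_2,\alpha_3)=\mathcal{L}_n(\lambda)$ where $\lambda_s=(r_s+\alpha_s)/n$, $s=1,2,3$. *)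

(* Defs.v *)
From Stdlib Require Import Reals Factorial.
Open Scope R_scope.

Fixpoint fall (y : R) (k : nat) : R :=
  match k with
  | O => 1
  | S k' => fall y k' * (y - INR k')
  end.

Definition lfac (n : nat) (lam : R) (k : nat) : R :=
  fall (INR n * lam) k / INR (fact k).

Definition lagr (n i1 i2 i3 : nat) (l1 l2 l3 : R) : R :=
  lfac n l1 i1 * lfac n l2 i2 * lfac n l3 i3.

Fixpoint sumto (m : nat) (f : nat -> R) : R :=
  match m with
  | O => f O
  | S m' => sumto m' f + f m
  end.

Definition lebesgue (n : nat) (l1 l2 l3 : R) : R :=
  sumto n (fun i1 => sumto (n - i1) (fun i2 =>
    Rabs (lagr n i1 i2 (n - i1 - i2) l1 l2 l3)))%nat.

Definition frakL (n r1 r2 r3 : nat) (a1 a2 a3 : R) : R :=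
  lebesgue n ((INR r1 + a1) / INR n) ((INR r2 + a2) / INR n)
             ((INR r3 + a3) / INR n).

(* Main.v *)
Require Import Defs.
From Stdlib Require Import Reals Lra Lia Psatz Arith.
Open Scope R_scope.

Lemma sumto_ext m f g : (forall i, (i <= m)%nat -> f i = g i) -> sumto m f = sumto m g.
Proof. induction m; intros H; simpl. apply H; lia. rewrite IHm by (intros; apply H; lia). rewrite H by lia. reflexivity. Qed.

Lemma sumto_le m f g : (forall i, (i <= m)%nat -> f i <= g i) -> sumto m f <= sumto m g.
Proof. induction m; intros H; simpl. apply H; lia. apply Rplus_le_compat. apply IHm; intros; apply H; lia. apply H; lia. Qed.

Lemma sumto_plus m f g : sumto m (fun i => f i + g i) = sumto m f + sumto m g.
Proof. induction m; simpl. reflexivity. rewrite IHm; ring. Qed.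

Lemma sumto_mult_l m c f : sumto m (fun i => c * f i) = c * sumto m f.
Proof. induction m; simpl. reflexivity. rewrite IHm; ring. Qed.

Lemma sumto_first m f : sumto (S m) f = f O + sumto m (fun i => f (S i)).
Proof. induction m. simpl. reflexivity. change (sumto (S (S m)) f) with (sumto (S m) f + f (S (S m))).
 rewrite IHm. simpl. ring. Qed.

Lemma sumto_rev m f : sumto m f = sumto m (fun i => f (m - i)%nat).
Proof. induction m. simpl. reflexivity.
 rewrite (sumto_first m (fun i => f (S m - i)%nat)). change (sumto (S m) f) with (sumto m f + f (S m)). rewrite IHm.
 replace (S m - 0)%nat with (S m) by lia. simpl (fun i => f (S m - S i)%nat). rewrite Rplus_comm. reflexivity. Qed.

Lemma sumto_nonneg m f : (forall i, (i <= m)%nat -> 0 <= f i) -> 0 <= sumto m f.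
Proof. induction m; intros H; simpl. apply H; lia. apply Rplus_le_le_0_compat. apply IHm; intros; apply H; lia. apply H; lia. Qed.

Lemma sumto_abs m f : Rabs (sumto m f) <= sumto m (fun i => Rabs (f i)).
Proof. induction m; simpl. lra. eapply Rle_trans. apply Rabs_triang. lra. Qed.

Lemma sumto_mono_n m m' f : (forall i, 0 <= f i) -> (m <= m')%nat -> sumto m f <= sumto m' f.
Proof. intros H Hm. induction Hm. lra. simpl. specialize (H (S m0)). lra. Qed.

Lemma sumto_tri n F : sumto n (fun k => sumto k (fun i => F i k)) =
  sumto n (fun i => sumto (n - i) (fun j => F i (i + j)%nat)).
Proof. induction n. simpl. reflexivity.
 change (sumto (S n) (fun k => sumto k (fun i => F i k))) with
   (sumto n (fun k => sumto k (fun i => F i k)) + sumto (S n) (fun i => F i (S n))).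
 rewrite IHn. change (sumto (S n) (fun i => sumto (S n - i) (fun j => F i (i + j)%nat))) with
  (sumto n (fun i => sumto (S n - i) (fun j => F i (i + j)%nat)) + sumto (S n - S n) (fun j => F (S n) (S n + j)%nat)).
 replace (S n - S n)%nat with O by lia. simpl (sumto 0 _). rewrite Nat.add_0_r.
 change (sumto (S n) (fun i => F i (S n))) with (sumto n (fun i => F i (S n)) + F (S n) (S n)).
 rewrite (sumto_ext n (fun i => sumto (S n - i) (fun j => F i (i + j)%nat))
   (fun i => sumto (n - i) (fun j => F i (i + j)%nat) + F i (S n))).
 rewrite sumto_plus. ring.
 intros i Hi. replace (S n - i)%nat with (S (n - i)) by lia. simpl. f_equal. f_equal. lia. Qed.

Definition conv (u v : nat -> R) (m : nat) : R := sumto m (fun i => u i * v (m - i)%nat).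

Lemma conv_assoc u v w m : conv u (conv v w) m = conv (conv u v) w m.
Proof. unfold conv.
 transitivity (sumto m (fun k => sumto k (fun i => u i * v (k - i)%nat * w (m - k)%nat))).
 2:{ apply sumto_ext; intros k Hk. rewrite Rmult_comm, <- sumto_mult_l.
     apply sumto_ext; intros; ring. }
 rewrite sumto_tri. apply sumto_ext; intros i Hi. rewrite <- sumto_mult_l.
 apply sumto_ext; intros j Hj. replace (i + j - i)%nat with j by lia.
 replace (m - (i + j))%nat with (m - i - j)%nat by lia. ring. Qed.

Lemma conv_comm u v m : conv u v m = conv v u m.
Proof. unfold conv. rewrite sumto_rev. apply sumto_ext; intros i Hi.
 replace (m - (m - i))%nat with i by lia. ring. Qed.

Lemma conv_ext u u' v v' m : (forall i, (i <= m)%nat -> u i = u' i) -> (forall i, (i <= m)%nat -> v i = v' i) ->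
  conv u v m = conv u' v' m.
Proof. intros H1 H2. unfold conv. apply sumto_ext; intros. rewrite H1, H2 by lia. reflexivity. Qed.

Lemma conv_mono u u' v v' m : (forall i, (i <= m)%nat -> 0 <= u i <= u' i) -> (forall i, (i <= m)%nat -> 0 <= v i <= v' i) ->
  conv u v m <= conv u' v' m.
Proof. intros H1 H2. unfold conv. apply sumto_le; intros i Hi.
 destruct (H1 i Hi). destruct (H2 (m - i)%nat ltac:(lia)). apply Rmult_le_compat; lra. Qed.

Lemma conv_nonneg u v m : (forall i, 0 <= u i) -> (forall i, 0 <= v i) -> 0 <= conv u v m.
Proof. intros. unfold conv. apply sumto_nonneg; intros. apply Rmult_le_pos; auto. Qed.

Lemma conv_plus_l u u' v m : conv (fun i => u i + u' i) v m = conv u v m + conv u' v m.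
Proof. unfold conv. rewrite <- sumto_plus. apply sumto_ext; intros; ring. Qed.

Definition sh (u : nat -> R) (k : nat) : R := match k with O => 0 | S k' => u k' end.

Lemma conv_sh u v m : conv (sh u) v m = sh (conv u v) m.
Proof. unfold conv. destruct m. simpl. ring. rewrite sumto_first. simpl sh at 1. simpl. rewrite Rmult_0_l, Rplus_0_l. reflexivity. Qed.

Definition cb (x : R) (k : nat) : R := fall x k / INR (fact k).
Definition fa (x : R) (k : nat) : R := Rabs (cb x k).

Lemma fact_pos k : 0 < INR (fact k).
Proof. apply lt_0_INR. apply lt_O_fact. Qed.

Lemma fact_S k : INR (fact (S k)) = (INR k + 1) * INR (fact k).
Proof. change (fact (S k)) with (S k * fact k)%nat. rewrite mult_INR, S_INR. reflexivity. Qed.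

Lemma cb_S x k : cb x (S k) = cb x k * (x - INR k) / (INR k + 1).
Proof. unfold cb. simpl fall. rewrite fact_S. pose proof (fact_pos k). pose proof (pos_INR k).
 field. lra. Qed.

Lemma cb_0 x : cb x 0 = 1.
Proof. unfold cb. simpl. lra. Qed.

Lemma fall_shift x k : fall (x + 1) (S k) = (x + 1) * fall x k.
Proof. induction k. simpl. ring. change (fall (x+1) (S (S k))) with (fall (x+1) (S k) * (x + 1 - INR (S k))).
 rewrite IHk. simpl fall. rewrite S_INR. ring. Qed.

Lemma pascal x k : cb (x + 1) k = cb x k + sh (cb x) k.
Proof. destruct k. simpl. rewrite !cb_0. ring.
 simpl sh. unfold cb. rewrite fall_shift. simpl (fall x (S k)). rewrite fact_S.
 pose proof (fact_pos k). pose proof (pos_INR k). field. lra. Qed.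

Lemma fall_nat_zero q l : (q < l)%nat -> fall (INR q) l = 0.
Proof. induction l; intros H. lia. simpl. destruct (Nat.eq_dec q l). subst. ring.
 rewrite IHl by lia. ring. Qed.

Lemma cb_nat_nonneg q l : 0 <= cb (INR q) l.
Proof. unfold cb. unfold Rdiv. apply Rmult_le_pos. 2: left; apply Rinv_0_lt_compat, fact_pos.
 induction l. simpl; lra. simpl. destruct (le_lt_dec l q).
 apply Rmult_le_pos. auto. apply le_INR in l0. lra.
 rewrite fall_nat_zero by lia. lra. Qed.

Lemma vandermonde q x m : cb (x + INR q) m = conv (cb (INR q)) (cb x) m.
Proof. revert x m. induction q; intros x m.
 - replace (x + INR 0) with x by (simpl; ring). unfold conv. destruct m. simpl. unfold cb; simpl; field.
   rewrite sumto_first. rewrite cb_0. rewrite Nat.sub_0_r.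
   rewrite (sumto_ext m _ (fun _ => 0)). 2:{ intros. unfold cb. rewrite fall_nat_zero by lia. unfold Rdiv. ring. }
   assert (sumto m (fun _ => 0) = 0). { induction m. reflexivity. simpl. rewrite IHm. ring. }
   rewrite H. ring.
 - rewrite S_INR. replace (x + (INR q + 1)) with ((x + INR q) + 1) by ring.
   rewrite pascal. rewrite (conv_ext (cb (INR q + 1)) (fun i => cb (INR q) i + sh (cb (INR q)) i) (cb x) (cb x)).
   2: intros; apply pascal. 2: reflexivity.
   rewrite conv_plus_l, conv_sh. rewrite IHq. f_equal. destruct m. reflexivity. simpl. apply IHq. Qed.

Lemma sum_binom q k : sumto k (cb (INR q)) <= 2 ^ q.
Proof. revert k. induction q; intros k.
 - change (2 ^ 0) with 1. destruct k. simpl sumto. rewrite cb_0. lra.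
   rewrite sumto_first. rewrite cb_0. rewrite (sumto_ext k _ (fun _ => 0)).
   2:{ intros. unfold cb. rewrite fall_nat_zero by lia. unfold Rdiv. ring. }
   assert (sumto k (fun _ => 0) = 0). { induction k. reflexivity. simpl. rewrite IHk. ring. } lra.
 - rewrite (sumto_ext k _ (fun i => cb (INR q) i + sh (cb (INR q)) i)).
   2:{ intros. rewrite S_INR. apply pascal. }
   rewrite sumto_plus. simpl pow. assert (sumto k (sh (cb (INR q))) <= 2 ^ q).
   { destruct k. simpl. pose proof (pow_le 2 q). lra. rewrite sumto_first. simpl sh. rewrite Rplus_0_l. apply IHq. }
   specialize (IHq k). lra. Qed.

Section Y.
Variables (p : nat) (y phi : R).
Hypothesis Hy : y = INR p + phi.
Hypothesis Hphi : 0 <= phi < 1.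

Lemma fall_y_nonneg i : (i <= S p)%nat -> 0 <= fall y i.
Proof. induction i; intros H. simpl; lra. simpl. apply Rmult_le_pos. apply IHi; lia.
 assert (INR i <= INR p) by (apply le_INR; lia). lra. Qed.

Lemma fall_y_le i : (i <= S p)%nat -> fall y i <= fall (INR (S p)) i.
Proof. assert (Hs: INR (S p) = INR p + 1) by apply S_INR. set (s := INR (S p)) in *.
 induction i; intros H. simpl; lra. change (fall y i * (y - INR i) <= fall s i * (s - INR i)).
 assert (INR i <= INR p) by (apply le_INR; lia).
 apply Rmult_le_compat. apply fall_y_nonneg; lia. lra. apply IHi; lia. lra. Qed.

Lemma cb_y_nonneg i : (i <= S p)%nat -> 0 <= cb y i.
Proof. intros. unfold cb, Rdiv. apply Rmult_le_pos. apply fall_y_nonneg; auto.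
 left; apply Rinv_0_lt_compat, fact_pos. Qed.

Lemma fall_nat m : fall (INR m) m = INR (fact m).
Proof. induction m. reflexivity. rewrite S_INR, fall_shift, IHm, fact_S. reflexivity. Qed.

Lemma cb_y_le1 : cb y (S p) <= 1.
Proof. unfold cb. pose proof (fall_y_le (S p) (Nat.le_refl _)). rewrite fall_nat in H.
 pose proof (fact_pos (S p)). apply Rmult_le_reg_r with (INR (fact (S p))). auto.
 unfold Rdiv. rewrite Rmult_assoc, Rinv_l by lra. lra. Qed.

Lemma cb_y_tail d : Rabs (cb y (S (S p) + d)) <= / (INR p + 2).
Proof. assert (Hp: 0 <= INR p) by apply pos_INR. induction d.
 - rewrite Nat.add_0_r. rewrite cb_S. rewrite S_INR.
   pose proof (cb_y_nonneg (S p) (Nat.le_refl _)). pose proof cb_y_le1.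
   set (c := cb y (S p)) in *.
   replace (c * (y - (INR p + 1)) / (INR p + 1 + 1)) with ((c * (phi - 1)) * / (INR p + 2)) by (rewrite Hy; field; lra).
   rewrite Rabs_mult, (Rabs_pos_eq (/ (INR p + 2))) by (left; apply Rinv_0_lt_compat; lra).
   rewrite <- (Rmult_1_l (/ (INR p + 2))) at 2. apply Rmult_le_compat_r. left; apply Rinv_0_lt_compat; lra.
   rewrite Rabs_mult, (Rabs_pos_eq c) by auto. rewrite Rabs_left1 by lra. nra.
 - replace (S (S p) + S d)%nat with (S (S (S p) + d)) by lia. rewrite cb_S.
   set (m := (S (S p) + d)%nat) in *. assert (INR (S (S p)) <= INR m) by (apply le_INR; lia).
   rewrite !S_INR in H. unfold Rdiv. rewrite !Rabs_mult. rewrite Rabs_inv.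
   rewrite (Rabs_pos_eq (INR m + 1)) by lra.
   rewrite Rmult_assoc. rewrite <- (Rmult_1_r (/ (INR p + 2))).
   apply Rmult_le_compat. apply Rabs_pos. apply Rmult_le_pos. apply Rabs_pos. left; apply Rinv_0_lt_compat; lra.
   auto. apply Rmult_le_reg_r with (INR m + 1). lra. rewrite Rmult_assoc, Rinv_l by lra.
   rewrite Rmult_1_r, Rmult_1_l. apply Rabs_le. lra. Qed.


End Y.

Lemma fa_small a i : 0 <= a < 1 -> (1 <= i)%nat -> fa a i <= / INR i.
Proof. intros Ha Hi. induction Hi.
 - unfold fa. replace (cb a 1) with a by (unfold cb; simpl; field). change (INR 1) with 1. rewrite Rinv_1, Rabs_pos_eq; lra.
 - unfold fa in *. rewrite cb_S. assert (INR 1 <= INR m) by (apply le_INR; lia). simpl in H.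
   unfold Rdiv. rewrite !Rabs_mult, Rabs_inv. rewrite (Rabs_pos_eq (INR m + 1)) by lra.
   rewrite (Rabs_left1 (a - INR m)) by lra. rewrite S_INR. replace (- (a - INR m)) with (INR m - a) by ring.
   apply Rle_trans with (/ INR m * (INR m - a) * / (INR m + 1)).
   apply Rmult_le_compat_r. left; apply Rinv_0_lt_compat; lra.
   apply Rmult_le_compat_r. lra. auto.
   apply Rmult_le_reg_r with (INR m + 1). lra. rewrite Rmult_assoc, Rinv_l by lra.
   field_simplify; try lra. apply Rmult_le_reg_r with (INR m). lra. unfold Rdiv. rewrite Rmult_assoc, Rinv_l by lra. lra. Qed.

Lemma fa_le1 a i : 0 <= a < 1 -> fa a i <= 1.
Proof. intros Ha. destruct i. unfold fa. rewrite cb_0, Rabs_R1. lra.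
 eapply Rle_trans. apply fa_small; auto; lia. rewrite <- Rinv_1. apply Rinv_le_contravar. lra.
 rewrite S_INR. pose proof (pos_INR i). lra. Qed.

Lemma ln_step t : 0 < t -> / (t + 1) <= ln (t + 1) - ln t.
Proof. intros Ht. pose proof (exp_ineq1_le (ln t - ln (t+1))).
 unfold Rminus in H. rewrite exp_plus, exp_Ropp, !exp_ln in H by lra.
 assert (t * / (t+1) = 1 - / (t+1)). field. lra. lra. Qed.

Fixpoint hsum (m : nat) : R := match m with O => 1 | S m' => hsum m' + / INR (S m') end.

Lemma hsum_le m : hsum (S m) <= 2 + ln (INR (S m)).
Proof. induction m. simpl. rewrite ln_1. lra.
 change (hsum (S (S m))) with (hsum (S m) + / INR (S (S m))).
 pose proof (ln_step (INR (S m)) (lt_0_INR _ (Nat.lt_0_succ m))). rewrite <- S_INR in H. lra. Qed.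

Lemma W_le a n : 0 <= a < 1 -> (1 <= n)%nat -> sumto n (fa a) <= 2 + ln (INR n).
Proof. intros Ha Hn. assert (sumto n (fa a) <= hsum n).
 { clear Hn. induction n. simpl. unfold fa. rewrite cb_0, Rabs_R1. lra. simpl. apply Rplus_le_compat. auto.
   apply fa_small; auto; lia. }
 destruct n. lia. pose proof (hsum_le n). lra. Qed.

Definition gg (p i : nat) : R := if (S (S p) <=? i)%nat then / (INR p + 2) else 0.

Lemma key q p y phi k : y = INR p + phi -> 0 <= phi < 1 ->
  conv (fa (INR q)) (fa y) k <= fa (y + INR q) k +
    (if (S (S p) <=? k)%nat then 2 * 2 ^ q / (INR p + 2) else 0).
Proof. intros Hy Hphi. assert (Hp : 0 <= INR p) by apply pos_INR.
 unfold fa at 3. rewrite vandermonde. unfold conv.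
 set (t := fun l => cb (INR q) l * cb y (k - l)%nat).
 set (d := fun l => cb (INR q) l * gg p (k - l)%nat).
 assert (H1 : forall l, (l <= k)%nat -> Rabs (cb (INR q) l) * Rabs (cb y (k - l)%nat) <= t l + 2 * d l).
 { intros l Hl. unfold t, d. rewrite <- Rabs_mult. pose proof (cb_nat_nonneg q l).
   assert (- (cb (INR q) l * cb y (k - l)%nat) <= cb (INR q) l * gg p (k - l)%nat).
   { unfold gg. destruct (S (S p) <=? k - l)%nat eqn:E.
     - apply Nat.leb_le in E. pose proof (cb_y_tail p y phi Hy Hphi (k - l - S (S p))).
       replace (S (S p) + (k - l - S (S p)))%nat with (k - l)%nat in H0 by lia.
       assert (- cb y (k - l)%nat <= / (INR p + 2)). { pose proof (Rle_abs (- cb y (k-l)%nat)). rewrite Rabs_Ropp in H1. lra. }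
       nra.
     - apply Nat.leb_gt in E. pose proof (cb_y_nonneg p y phi Hy Hphi (k - l) ltac:(lia)). nra. }
   destruct (Rle_dec 0 (cb (INR q) l * cb y (k - l)%nat)).
   rewrite Rabs_pos_eq by auto. pose proof (cb_nat_nonneg q l).
   assert (0 <= gg p (k - l)%nat). { unfold gg. destruct (S (S p) <=? k - l)%nat. left; apply Rinv_0_lt_compat; lra. lra. }
   nra. rewrite Rabs_left by lra. lra. }
 eapply Rle_trans. apply sumto_le. exact H1. rewrite sumto_plus, sumto_mult_l.
 apply Rplus_le_compat. apply Rle_abs.
 destruct (S (S p) <=? k)%nat eqn:E.
 - unfold d. apply Rle_trans with (2 * (/ (INR p + 2) * sumto k (cb (INR q)))).
   apply Rmult_le_compat_l. lra. rewrite <- sumto_mult_l. apply sumto_le. intros l Hl.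
   pose proof (cb_nat_nonneg q l). assert (0 < / (INR p + 2)) by (apply Rinv_0_lt_compat; lra).
   unfold gg. destruct (S (S p) <=? k - l)%nat. rewrite Rmult_comm; lra. rewrite Rmult_0_r; apply Rmult_le_pos; lra.
   pose proof (sum_binom q k). unfold Rdiv.
   assert (0 < / (INR p + 2)) by (apply Rinv_0_lt_compat; lra).
   rewrite (Rmult_comm (/ (INR p + 2))), <- Rmult_assoc. apply Rmult_le_compat_r; lra.
 - apply Nat.leb_gt in E. unfold d. rewrite (sumto_ext k _ (fun _ => 0)).
   assert (sumto k (fun _ => 0) = 0). { clear. induction k. reflexivity. simpl. rewrite IHk. ring. } lra.
   intros l Hl. unfold gg. destruct (S (S p) <=? k - l)%nat eqn:E2. apply Nat.leb_le in E2. lia. ring. Qed.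

Lemma fa_nonneg x i : 0 <= fa x i.
Proof. apply Rabs_pos. Qed.

Lemma sum_e n p K : 0 <= K ->
  sumto n (fun k => if (S (S p) <=? k)%nat then K else 0) <= K * INR (n - S p).
Proof. intros HK. induction n.
 - simpl. rewrite Rmult_0_r. lra.
 - change (sumto (S n) (fun k => if (S (S p) <=? k)%nat then K else 0)) with
     (sumto n (fun k => if (S (S p) <=? k)%nat then K else 0) + if (S (S p) <=? S n)%nat then K else 0).
   destruct (S (S p) <=? S n)%nat eqn:E.
   + apply Nat.leb_le in E. replace (S n - S p)%nat with (S (n - S p)) by lia. rewrite S_INR. lra.
   + assert (INR (n - S p) <= INR (S n - S p)) by (apply le_INR; lia). nra. Qed.

Lemma core n q p y phi a2 a3 : y = INR p + phi -> 0 <= phi < 1 -> 0 <= a2 < 1 -> 0 <= a3 < 1 ->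
  conv (fa y) (conv (fa (a2 + INR q)) (fa a3)) n <=
  conv (fa (y + INR q)) (conv (fa a2) (fa a3)) n +
   2 * 2 ^ q / (INR p + 2) * INR (n - S p) * sumto n (fa a3).
Proof. intros Hy Hphi H2 H3. assert (Hp : 0 <= INR p) by apply pos_INR.
 set (B := fa (INR q)). set (f2 := fa a2). set (f3 := fa a3). set (G := conv f2 f3).
 set (K := 2 * 2 ^ q / (INR p + 2)).
 assert (HK : 0 <= K). { unfold K. unfold Rdiv. apply Rmult_le_pos. pose proof (pow_le 2 q). lra. left; apply Rinv_0_lt_compat; lra. }
 set (e := fun k => if (S (S p) <=? k)%nat then K else 0).
 apply Rle_trans with (conv (fa y) (conv (conv B f2) f3) n).
 { apply conv_mono; intros i Hi. split. apply fa_nonneg. lra.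
   split. apply conv_nonneg; intros; apply fa_nonneg.
   apply conv_mono; intros j Hj; split; try apply fa_nonneg.
   unfold fa at 1. rewrite vandermonde. unfold conv. eapply Rle_trans. apply sumto_abs.
   apply sumto_le. intros. apply Req_le. unfold B, f2, fa. apply Rabs_mult. lra. }
 rewrite (conv_ext (fa y) (fa y) (conv (conv B f2) f3) (conv B G)) by (intros; first [reflexivity | symmetry; apply conv_assoc]).
 rewrite conv_assoc.
 rewrite (conv_ext (conv (fa y) B) (conv B (fa y)) G G) by (intros; first [apply conv_comm | reflexivity]).
 apply Rle_trans with (conv (fun k => fa (y + INR q) k + e k) G n).
 { apply conv_mono; intros i Hi. split. apply conv_nonneg; intros; apply fa_nonneg.
   apply key with phi; auto. split. apply conv_nonneg; intros; apply fa_nonneg. lra. }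
 rewrite conv_plus_l. apply Rplus_le_compat_l.
 assert (HG : forall j, (j <= n)%nat -> G j <= sumto n f3).
 { intros j Hj. unfold G, conv. apply Rle_trans with (sumto j (fun i => f3 (j - i)%nat)).
   apply sumto_le; intros. pose proof (fa_le1 a2 i H2). pose proof (fa_nonneg a3 (j - i)). unfold f2, f3. nra.
   rewrite <- sumto_rev. apply sumto_mono_n. intros; apply fa_nonneg. auto. }
 unfold conv at 1. apply Rle_trans with (sumto n (fun k => e k * sumto n f3)).
 { apply sumto_le; intros. apply Rmult_le_compat_l. unfold e; destruct (S (S p) <=? i)%nat; lra. apply HG; lia. }
 rewrite (sumto_ext n _ (fun k => sumto n f3 * e k)) by (intros; ring). rewrite sumto_mult_l.
 pose proof (sum_e n p K HK). fold e in H.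
 assert (0 <= sumto n f3) by (apply sumto_nonneg; intros; apply fa_nonneg). nra. Qed.

Lemma leb_conv n l1 l2 l3 : lebesgue n l1 l2 l3 =
  conv (fa (INR n * l1)) (conv (fa (INR n * l2)) (fa (INR n * l3))) n.
Proof. unfold lebesgue, conv. apply sumto_ext; intros i Hi. rewrite <- sumto_mult_l.
 apply sumto_ext; intros j Hj. unfold lagr, lfac, fa, cb. rewrite !Rabs_mult.
 replace (n - i - j)%nat with (n - i - j)%nat by reflexivity. ring. Qed.

Lemma pow_bound q : INR q ^ 2 + INR q + 2 <= 4 * 2 ^ q.
Proof. induction q. simpl. lra. rewrite S_INR. simpl pow. simpl pow in IHq.
 destruct q. simpl in *. lra. assert (1 <= INR (S q)) by (rewrite S_INR; pose proof (pos_INR q); lra). nra. Qed.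

Lemma fin q p c W L : 0 <= W <= 2 + L -> 0 <= L -> 0 <= INR p ->
  INR c * (INR q + 2) <= (INR q + 1) * (INR p + 2) ->
  2 * 2 ^ q / (INR p + 2) * INR c * W <= 2 ^ (q + 2) + 1 - INR q + 2 ^ (q + 1) * L.
Proof. intros HW HL Hp Hc. rewrite !pow_add. simpl pow.
 pose proof (pow_bound q). pose proof (pow_le 2 q ltac:(lra)). set (P := 2 ^ q) in *.
 pose proof (pos_INR q). pose proof (pos_INR c). set (Q := INR q) in *.
 assert (Hu : INR c / (INR p + 2) <= (Q + 1) / (Q + 2)).
 { apply Rmult_le_reg_r with ((INR p + 2) * (Q + 2)). nra.
   unfold Rdiv. replace (INR c * / (INR p + 2) * ((INR p + 2) * (Q + 2))) with (INR c * (Q + 2)) by (field; lra).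
   replace ((Q + 1) * / (Q + 2) * ((INR p + 2) * (Q + 2))) with ((Q + 1) * (INR p + 2)) by (field; lra). lra. }
 assert (Hu0 : 0 <= INR c / (INR p + 2)) by (unfold Rdiv; apply Rmult_le_pos; [lra | left; apply Rinv_0_lt_compat; lra]).
 replace (2 * P / (INR p + 2) * INR c * W) with (2 * P * W * (INR c / (INR p + 2))) by (field; lra).
 apply Rle_trans with (2 * P * (2 + L) * ((Q + 1) / (Q + 2))).
 { apply Rmult_le_compat; nra. }
 apply Rmult_le_reg_r with (Q + 2). lra.
 replace (2 * P * (2 + L) * ((Q + 1) / (Q + 2)) * (Q + 2)) with (2 * P * (2 + L) * (Q + 1)) by (field; lra).
 nra. Qed.

Theorem lemma16 (n r1 r2 : nat) (a1 a2 a3 : R) :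
  (4 <= n)%nat ->
  (r1 + r2 = n - 1)%nat ->
  -1 < a1 < 1 ->
  0 <= a2 < 1 ->
  0 <= a3 < 1 ->
  a1 + a2 + a3 = 1 ->
  INR r1 + a1 >= INR r2 + a2 ->
  frakL n r1 r2 0 a1 a2 a3 <=
    frakL n (r1 + r2) 0 0 a1 a2 a3 + 2 ^ (r2 + 2) + 1 - INR r2
    + 2 ^ (r2 + 1) * ln (INR n).
Proof. intros Hn Hr H1 H2 H3 Hs Hge.
 assert (Hn0 : INR n <> 0) by (apply not_0_INR; lia).
 assert (E : forall r a, INR n * ((INR r + a) / INR n) = INR r + a) by (intros; field; auto).
 unfold frakL. rewrite !leb_conv, !E.
 replace (INR r2 + a2) with (a2 + INR r2) by ring.
 replace (INR 0 + a3) with a3 by (simpl; ring). replace (INR 0 + a2) with a2 by (simpl; ring).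
 replace (INR (r1 + r2) + a1) with ((INR r1 + a1) + INR r2) by (rewrite plus_INR; ring).
 assert (HL : 0 <= ln (INR n)).
 { assert (1 <= INR n) by (rewrite <- INR_1; apply le_INR; lia).
   destruct (Req_dec (INR n) 1) as [Heq|Hneq]. rewrite Heq, ln_1; lra. left. rewrite <- ln_1. apply ln_increasing; lra. }
 pose proof (W_le a3 n H3 ltac:(lia)) as HW.
 assert (HW0 : 0 <= sumto n (fa a3)) by (apply sumto_nonneg; intros; apply fa_nonneg).
 pose proof (pos_INR r1). pose proof (pos_INR r2).
 assert (Hnr : n = (r1 + r2 + 1)%nat) by lia.
 destruct (Rle_lt_dec 0 a1) as [Ha | Ha].
 - pose proof (core n r2 r1 (INR r1 + a1) a1 a2 a3 eq_refl ltac:(lra) H2 H3) as Hc.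
   assert (r2 <= r1)%nat. { assert (INR r2 < INR (S r1)) by (rewrite S_INR; lra). apply INR_lt in H4. lia. }
   pose proof (fin r2 r1 (n - S r1) (sumto n (fa a3)) (ln (INR n)) ltac:(lra) HL (pos_INR r1)) as Hf.
   replace (n - S r1)%nat with r2 in * by lia.
   assert (INR r2 <= INR r1) by (apply le_INR; auto).
   specialize (Hf ltac:(nra)). lra.
 - destruct r1 as [|p]. simpl in Hge. lra.
   assert (Hy : INR (S p) + a1 = INR p + (1 + a1)) by (rewrite S_INR; ring).
   pose proof (core n r2 p (INR (S p) + a1) (1 + a1) a2 a3 Hy ltac:(lra) H2 H3) as Hc.
   assert (r2 <= p)%nat. { assert (INR r2 < INR (S p)) by lra. apply INR_lt in H4. lia. }
   pose proof (fin r2 p (n - S p) (sumto n (fa a3)) (ln (INR n)) ltac:(lra) HL (pos_INR p)) as Hf.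
   replace (n - S p)%nat with (S r2) in * by lia.
   assert (INR r2 <= INR p) by (apply le_INR; auto). rewrite S_INR in Hf.
   assert (HH : (INR r2 + 1) * (INR r2 + 2) <= (INR r2 + 1) * (INR p + 2)) by (apply Rmult_le_compat_l; lra).
   specialize (Hf HH). replace (INR (S r2)) with (INR r2 + 1) in Hc by (rewrite S_INR; ring). lra.
Qed.
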